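(* Let $T$ be a countable tree with root $o$, and let $Q$ be a stochastic matrix on $T$ with $q(x,y)>0$ iff $x=y^-$. Let $\lambda\in\mathbb{C}\setminus\{0\}$ and $n\ge1$. Every $\lambda$-polyharmonic function $f$ of order $n$ for $Q$ has an integral representation $$f(x)=\sum_{r=0}^{n-1}\int_{\partial T}K_Q^{(r)}(x,\xi\mid\lambda)\,d\sigma_r(\xi),\qquad x\in T,$$ where the complex distributions $\sigma_0,\dots,\sigma_{n-1}$ are uniquely determined by $f$. Conversely, every function with such a representation is $\lambda$-polyharmonic of order $n$ for $Q$.
   Context: $|x|=d(o,x)$. $x^-$ is the neighbour of $x\ne o$ closer to $o$. $\partial T$ is the set of ends of $T$, and $\partial T_x$ is the set of ends whose geodesic ray from $o$ passes through $x$. $Qf(x)=\sum_{y:\,y^-=x}q(x,y)f(y)$, required to converge absolutely. $f$ is $\lambda$-polyharmonic of order $n$ for $Q$ if $(\lambda I-Q)^nf=0$. $q^{(n)}(o,x)=\prod_{i=1}^n q(x_{i-1},x_i)$ for $\pi(o,x)=[o=x_0,\dots,x_n=x]$. $K_Q(x,\xi\mid\lambda)=\lambda^{|x|}/q^{(|x|)}(o,x)$ if $x$ lies on the ray from $o$ to $\xi$, and $0$ otherwise. $K_Q^{(r)}$ denotes the $r$-th derivative with respect to $\lambda$; for fixed $x$ it is a constant multiple of the indicator of $\partial T_x$. A complex distribution is $\sigma:\{\partial T_x\}\to\mathbb{C}$ with $\sigma(\partial T_x)=\sum_{y^-=x}\sigma(\partial T_y)$, absolutely convergent. The integral of $c\cdot\mathbf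 1_{\partial T_x}$ is $c\,\sigma(\partial T_x)$. *)

(* Defs.v *)
From mathcomp Require Import all_boot all_algebra.
From mathcomp Require Import all_classical all_reals all_analysis.
From mathcomp Require Import complex.
Import GRing.Theory Num.Theory numFieldNormedType.Exports.

Set Implicit Arguments.
Unset Strict Implicit.
Unset Printing Implicit Defensive.

Local Open Scope ring_scope.

Section TreeDefs.
Variables (R : realType) (T : countType) (o : T) (par : T -> T).

(** A rooted tree on the countable vertex set [T], with root [o], given by the
    predecessor map [par] (x^- = par x for x <> o; [par o] is irrelevant).
    Edges are {x, par x} for x <> o; the tree condition is that every vertex
    reaches the root by finitely many predecessor steps. *)
Definition rooted_tree : Prop := forall x : T, exists k : nat, iter k par x = o.

Definition child (x y : T) : bool := (y != o) && (par y == x).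

Definition depth (x : T) : nat :=
  match pselect (exists k, [pred k | iter k par x == o] k) with
  | left h => ex_minn h
  | right _ => 0%N
  end.

(** Countable (unordered) sums over a subset [A] of [T], via the canonical
    enumeration of the countType: the n-th term is g y if n = pickle y, y in A. *)
Definition seqext (V : zmodType) (A : pred T) (g : T -> V) (k : nat) : V :=
  if @pickle_inv T k is Some y then (if A y then g y else 0) else 0.

Definition rsummable (A : pred T) (g : T -> R) : Prop :=
  cvgn (series (seqext A (fun y => `|g y|))).
Definition rsum (A : pred T) (g : T -> R) : R := limn (series (seqext A g)).

Definition csummable (A : pred T) (g : T -> R[i]) : Prop :=
  cvgn (series (seqext A (fun y => ComplexField.Normc.normc (g y)))).
Definition csum (A : pred T) (g : T -> R[i]) : R[i] :=
  Complex (limn (series (seqext A (fun y => complex.Re (g y)))))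
          (limn (series (seqext A (fun y => complex.Im (g y))))).

Definition stochastic (q : T -> T -> R) : Prop :=
  (forall x y, 0 <= q x y) /\
  (forall x, rsummable (fun _ => true) (q x) /\ rsum (fun _ => true) (q x) = 1).

Definition Qdefined (q : T -> T -> R) (f : T -> R[i]) : Prop :=
  forall x, csummable (child x) (fun y => (q x y)%:C%C * f y).
Definition Qop (q : T -> T -> R) (f : T -> R[i]) : T -> R[i] :=
  fun x => csum (child x) (fun y => (q x y)%:C%C * f y).

Definition Lop (q : T -> T -> R) (lam : R[i]) (f : T -> R[i]) : T -> R[i] :=
  fun x => lam * f x - Qop q f x.

Definition polyharmonic (q : T -> T -> R) (lam : R[i]) (n : nat)
    (f : T -> R[i]) : Prop :=
  (forall k, (k < n)%N -> Qdefined q (iter k (Lop q lam) f)) /\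
  (forall x, iter n (Lop q lam) f x = 0).

(** q^{(|x|)}(o,x): product of the transition probabilities along pi(o,x). *)
Definition qpath (q : T -> T -> R) (x : T) : R :=
  \prod_(i < depth x) q (par (iter i par x)) (iter i par x).

(** The constant c such that K_Q^{(r)}(x, . | lam) = c * 1_{dT_x}:
    c = (d/dlam)^r lam^{|x|} / q^{(|x|)}(o,x)   (formal derivative of 'X^{|x|}). *)
Definition Kcoef (q : T -> T -> R) (lam : R[i]) (r : nat) (x : T) : R[i] :=
  (('X^(depth x))^`(r)).[lam] / (qpath q x)%:C%C.

(** A complex distribution, sigma(dT_x) being stored as sigma x:
    sigma(dT_x) = sum_{y^- = x} sigma(dT_y), absolutely convergent. *)
Definition cdistr (sigma : T -> R[i]) : Prop :=
  forall x, csummable (child x) sigma /\ sigma x = csum (child x) sigma.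

(** The integral of c * 1_{dT_x} against sigma is c * sigma(dT_x). *)
Definition cyl_integral (sigma : T -> R[i]) (c : R[i]) (x : T) : R[i] :=
  c * sigma x.

Definition Krepr (q : T -> T -> R) (lam : R[i]) (n : nat)
    (sigma : 'I_n -> T -> R[i]) (x : T) : R[i] :=
  \sum_(r < n) cyl_integral (sigma r) (Kcoef q lam r x) x.

End TreeDefs.

(* Main.v *)
Require Import Defs.
From mathcomp Require Import all_boot all_algebra.
From mathcomp Require Import all_classical all_reals all_analysis.
From mathcomp Require Import complex.
From mathcomp Require Import ring.
Import GRing.Theory Num.Theory numFieldNormedType.Exports.
Local Open Scope ring_scope.
Set Implicit Arguments.
Unset Strict Implicit.
Section Sum.
Variables (R : realType) (T : countType).
Local Notation nc := (@ComplexField.Normc.normc R).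
Implicit Types (A : pred T) (g h : T -> R[i]) (u v : T -> R).

Lemma nc_ge0 (z : R[i]) : 0 <= nc z.
Proof. by case: z => a b; rewrite /= sqrtr_ge0. Qed.

Lemma Re_le_nc (z : R[i]) : `|complex.Re z| <= nc z.
Proof.
case: z => a b /=; rewrite -sqrtr_sqr; apply: ler_wsqrtr.
by rewrite lerDl sqr_ge0.
Qed.

Lemma Im_le_nc (z : R[i]) : `|complex.Im z| <= nc z.
Proof.
case: z => a b /=; rewrite -sqrtr_sqr; apply: ler_wsqrtr.
by rewrite lerDr sqr_ge0.
Qed.

Lemma seqext_eq (V : zmodType) A (g h : T -> V) :
  (forall y, A y -> g y = h y) -> seqext A g = seqext A h.
Proof.
move=> e; apply/funext => k; rewrite /seqext.
by case: pickle_inv => // y; case: ifP => // /e ->.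
Qed.

Lemma seqext_map (V W : zmodType) A (f : V -> W) (g : T -> V) :
  f 0 = 0 -> seqext A (f \o g) = f \o seqext A g.
Proof.
move=> f0; apply/funext => k; rewrite /seqext /=.
by case: pickle_inv => // y; case: ifP.
Qed.

Lemma seqextD (V : zmodType) A (g h : T -> V) :
  seqext A (fun y => g y + h y) = seqext A g + seqext A h.
Proof.
apply/funext => k; rewrite -[RHS]/(seqext A g k + seqext A h k) /seqext.
by case: pickle_inv => [y|]; [case: ifP => _|]; rewrite ?addr0.
Qed.

Lemma seqextN (V : zmodType) A (g : T -> V) :
  seqext A (fun y => - g y) = - seqext A g.
Proof.
apply/funext => k; rewrite -[RHS]/(- seqext A g k) /seqext.
by case: pickle_inv => [y|]; [case: ifP => _|]; rewrite ?oppr0.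
Qed.

Lemma seqextZ A (c : R) (g : T -> R) :
  seqext A (fun y => c * g y) = c *: seqext A g.
Proof.
apply/funext => k; rewrite -[RHS]/(c * seqext A g k) /seqext.
by case: pickle_inv => [y|]; [case: ifP => _|]; rewrite ?mulr0.
Qed.

Lemma seqext0 (V : zmodType) A : seqext A (fun _ : T => (0 : V)) = 0.
Proof.
apply/funext => k; rewrite /seqext /=.
case: pickle_inv => [y|] //=.
by case: ifP.
Qed.

Definition rs A (u : T -> R) := limn (series (seqext A u)).
Definition rcv A (u : T -> R) := cvgn (series (seqext A u)).

Lemma csumE A g : csum A g =
  Complex (rs A (fun y => complex.Re (g y))) (rs A (fun y => complex.Im (g y))).
Proof. by []. Qed.

Lemma rcv_Re A g : csummable A g -> rcv A (fun y => complex.Re (g y)).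
Proof.
move=> hs; apply: normed_cvg.
apply: (series_le_cvg _ _ _ hs).
- by move=> k; exact: normr_ge0.
- by move=> k; rewrite /seqext; case: pickle_inv => // y; case: ifP => // _; exact: nc_ge0.
- move=> k; rewrite /seqext /=; case: pickle_inv => [y|] /=; last by rewrite normr0.
  by case: ifP => _; [exact: Re_le_nc|rewrite normr0].
Qed.

Lemma rcv_Im A g : csummable A g -> rcv A (fun y => complex.Im (g y)).
Proof.
move=> hs; apply: normed_cvg.
apply: (series_le_cvg _ _ _ hs).
- by move=> k; exact: normr_ge0.
- by move=> k; rewrite /seqext; case: pickle_inv => // y; case: ifP => // _; exact: nc_ge0.
- move=> k; rewrite /seqext /=; case: pickle_inv => [y|] /=; last by rewrite normr0.
  by case: ifP => _; [exact: Im_le_nc|rewrite normr0].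
Qed.

Lemma rsD A u v : rcv A u -> rcv A v -> rs A (fun y => u y + v y) = rs A u + rs A v.
Proof.
move=> hu hv; rewrite /rs seqextD seriesD limD //.
Qed.

Lemma rcvD A u v : rcv A u -> rcv A v -> rcv A (fun y => u y + v y).
Proof. move=> hu hv; rewrite /rcv seqextD seriesD; exact: is_cvgD. Qed.

Lemma rsN A u : rcv A u -> rs A (fun y => - u y) = - rs A u.
Proof. move=> hu; rewrite /rs seqextN seriesN limN //. Qed.

Lemma rcvN A u : rcv A u -> rcv A (fun y => - u y).
Proof. move=> hu; rewrite /rcv seqextN seriesN; exact: is_cvgN. Qed.

Lemma rsZ A c u : rcv A u -> rs A (fun y => c * u y) = c * rs A u.
Proof. move=> hu; rewrite /rs seqextZ seriesZ limZl_tmp //. Qed.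

Lemma rcvZ A c u : rcv A u -> rcv A (fun y => c * u y).
Proof. move=> hu; rewrite /rcv seqextZ seriesZ; exact: is_cvgZl_tmp. Qed.

Lemma rs_eq A u v : (forall y, A y -> u y = v y) -> rs A u = rs A v.
Proof. by move=> e; rewrite /rs (@seqext_eq _ _ _ _ e). Qed.

Lemma series0 : series (0 : R^nat) = 0.
Proof. by apply/funext => n; rewrite /series /= big1. Qed.

Lemma rs0 A : rs A (fun _ => 0) = 0.
Proof. by rewrite /rs seqext0 series0 lim_cst. Qed.

Lemma csummable_eq A g h : (forall y, A y -> g y = h y) ->
  csummable A g -> csummable A h.
Proof.
move=> e; rewrite /csummable (@seqext_eq _ A (fun y => nc (g y)) (fun y => nc (h y))) //.
by move=> y /e ->.
Qed.

Lemma csum_eq A g h : (forall y, A y -> g y = h y) -> csum A g = csum A h.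
Proof.
by move=> e; rewrite !csumE; congr Complex; apply: rs_eq => y /e ->.
Qed.

Lemma csummable0 A : csummable A (fun _ => 0 : R[i]).
Proof.
rewrite /csummable.
have -> : (fun y : T => nc 0) = (fun _ => 0) by apply/funext => y; rewrite ComplexField.Normc.normc0.
rewrite seqext0 series0; exact: is_cvg_cst.
Qed.

Lemma csum0 A : csum A (fun _ => 0 : R[i]) = 0.
Proof. by rewrite csumE /= rs0. Qed.

Lemma csummableD A g h : csummable A g -> csummable A h -> csummable A (fun y => g y + h y).
Proof.
move=> hg hh; rewrite /csummable.
apply: (series_le_cvg (v_ := seqext A (fun y => nc (g y) + nc (h y)))).
- by move=> k; rewrite /seqext; case: pickle_inv => // y; case: ifP => // _; exact: nc_ge0.
- by move=> k; rewrite /seqext; case: pickle_inv => // y; case: ifP => // _; rewrite addr_ge0 ?nc_ge0.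
- move=> k; rewrite /seqext; case: pickle_inv => // y; case: ifP => // _.
  exact: le_normcD.
- exact: (@rcvD A (fun y => nc (g y)) (fun y => nc (h y)) hg hh).
Qed.

Lemma csummableZ A c g : csummable A g -> csummable A (fun y => c * g y).
Proof.
move=> hg; rewrite /csummable.
have -> : (fun y => nc (c * g y)) = (fun y => nc c * nc (g y)).
  by apply/funext => y; rewrite ComplexField.Normc.normcM.
exact: (@rcvZ A (nc c) (fun y => nc (g y)) hg).
Qed.

Lemma csumD A g h : csummable A g -> csummable A h ->
  csum A (fun y => g y + h y) = csum A g + csum A h.
Proof.
move=> hg hh; rewrite !csumE.
rewrite (@rs_eq A (fun y => complex.Re (g y + h y)) (fun y => complex.Re (g y) + complex.Re (h y))); last first.
  by move=> y _; case: (g y); case: (h y).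
rewrite (@rs_eq A (fun y => complex.Im (g y + h y)) (fun y => complex.Im (g y) + complex.Im (h y))); last first.
  by move=> y _; case: (g y); case: (h y).
rewrite (rsD (rcv_Re hg) (rcv_Re hh)) (rsD (rcv_Im hg) (rcv_Im hh)).
by [].
Qed.

Lemma csumZ A c g : csummable A g -> csum A (fun y => c * g y) = c * csum A g.
Proof.
move=> hg; rewrite !csumE.
rewrite (@rs_eq A (fun y => complex.Re (c * g y))
   (fun y => complex.Re c * complex.Re (g y) + - (complex.Im c * complex.Im (g y)))); last first.
  by move=> y _; case: (g y); case: c.
rewrite (@rs_eq A (fun y => complex.Im (c * g y))
   (fun y => complex.Re c * complex.Im (g y) + complex.Im c * complex.Re (g y))); last first.
  by move=> y _; case: (g y); case: c.
rewrite rsD; [|exact: rcvZ (rcv_Re hg)| apply: (@rcvN A (fun y => complex.Im c * complex.Im (g y))); exact: rcvZ (rcv_Im hg)].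
rewrite rsD; [|exact: rcvZ (rcv_Im hg)| exact: rcvZ (rcv_Re hg)].
rewrite rsN; last exact: rcvZ (rcv_Im hg).
rewrite !rsZ; [|exact: rcv_Re hg|exact: rcv_Im hg|exact: rcv_Im hg|exact: rcv_Re hg].
by case: c.
Qed.

Lemma csum_sum A m (F : 'I_m -> T -> R[i]) : (forall r, csummable A (F r)) ->
  csummable A (fun y => \sum_(r < m) F r y) /\
  csum A (fun y => \sum_(r < m) F r y) = \sum_(r < m) csum A (F r).
Proof.
elim: m F => [|m IH] F hF.
  have e : forall y, A y -> (fun _ => 0 : R[i]) y = \sum_(r < 0) F r y by move=> y _; rewrite big_ord0.
  split; first by apply: (csummable_eq e); exact: csummable0.
  by rewrite -(csum_eq e) csum0 big_ord0.
have [h1 h2] := IH (fun r => F (widen_ord (leqnSn m) r)) (fun r => hF _).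
have e : forall y, A y -> (fun y => \sum_(r < m) F (widen_ord (leqnSn m) r) y + F ord_max y) y
   = \sum_(r < m.+1) F r y by move=> y _; rewrite big_ord_recr.
split; first exact: (csummable_eq e (csummableD h1 (hF _))).
by rewrite -(csum_eq e) csumD // h2 big_ord_recr.
Qed.

End Sum.

Section Tree.
Variables (R : realType) (T : countType) (o : T) (par : T -> T).
Variables (q : T -> T -> R) (lam : R[i]).
Hypothesis rooted : rooted_tree o par.
Hypothesis qpos : forall x y, 0 < q x y <-> child o par x y.
Hypothesis lam0 : lam != 0.

Lemma depth_spec x : iter (depth o par x) par x = o /\
  forall j, (j < depth o par x)%N -> iter j par x != o.
Proof.
rewrite /depth; case: pselect => [h|h]; last first.
  by exfalso; apply: h; have [k hk] := rooted x; exists k; apply/eqP.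
case: ex_minnP => m /eqP Pm minm; split => // j hj; apply/negP => /eqP e.
by have := minm j (introT eqP e); rewrite leqNgt hj.
Qed.

Lemma depth_unique x k : iter k par x = o ->
  (forall j, (j < k)%N -> iter j par x != o) -> depth o par x = k.
Proof.
move=> hk hj; have [h1 h2] := depth_spec x.
have [lt|ge] := ltnP (depth o par x) k.
  by have := hj _ lt; rewrite h1 eqxx.
move: ge; rewrite leq_eqVlt => /orP[/eqP -> //|lt].
by have := h2 _ lt; rewrite hk eqxx.
Qed.

Lemma child_par x y : child o par x y -> par y = x /\ y != o.
Proof. by case/andP => h1 /eqP h2. Qed.

Lemma depth_child x y : child o par x y -> depth o par y = (depth o par x).+1.
Proof.
move=> /child_par [py yo]; have [h1 h2] := depth_spec x.
apply: depth_unique; first by rewrite iterSr py.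
by case=> [|j] // hj; rewrite iterSr py; apply: h2.
Qed.

Lemma qpath_child x y : child o par x y -> qpath o par q y = q x y * qpath o par q x.
Proof.
move=> hc; rewrite /qpath (depth_child hc) big_ord_recl /=.
have [py _] := child_par hc; rewrite py; congr (_ * _).
by apply: eq_bigr => i _; rewrite add0n -iterS iterSr py.
Qed.

Lemma qpath_gt0 x : 0 < qpath o par q x.
Proof.
rewrite /qpath; apply: prodr_gt0 => i _; apply/qpos.
have [_ h2] := depth_spec x.
by rewrite /child h2 // eqxx.
Qed.

Lemma qpathC_neq0 x : (qpath o par q x)%:C%C != 0 :> R[i].
Proof. by rewrite fmorph_eq0 lt0r_neq0 ?qpath_gt0. Qed.

Lemma qC_neq0 x y : child o par x y -> (q x y)%:C%C != 0 :> R[i].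
Proof. by move=> /qpos h; rewrite fmorph_eq0 lt0r_neq0. Qed.

Definition ac r M := (('X^M)^`(r)).[lam].

Lemma ac0 M : ac 0 M = lam ^+ M.
Proof. by rewrite /ac derivn0 hornerXn. Qed.

Lemma acSS r M : ac r.+1 M.+1 = ac r M *+ r.+1 + ac r.+1 M * lam.
Proof.
rewrite /ac exprSr -(addr0 ('X^M * 'X)) -polyC0 derivnMXaddC.
by rewrite hornerD hornerMn hornerMX.
Qed.

Definition KR n (s : nat -> T -> R[i]) x :=
  \sum_(r < n) Kcoef o par q lam r x * s r x.

Definition shift (s : nat -> T -> R[i]) r y := - (r.+1)%:R * s r.+1 y.

Lemma q_KR m s x y : child o par x y ->
  (q x y)%:C%C * KR m s y =
  \sum_(r < m) (ac r (depth o par x).+1 / (qpath o par q x)%:C%C) * s r y.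
Proof.
move=> hc; rewrite /KR mulr_sumr; apply: eq_bigr => r _.
rewrite /Kcoef (depth_child hc) (qpath_child hc) rmorphM /= -/(ac _ _).
have h1 := qC_neq0 hc; have h2 := qpathC_neq0 x.
by field; rewrite h1 h2.
Qed.

Lemma QdefKR m s : (forall r, (r < m)%N -> cdistr o par (s r)) ->
  Qdefined o par q (KR m s).
Proof.
move=> hs x.
have e : forall y, child o par x y ->
  (fun y => \sum_(r < m) (ac r (depth o par x).+1 / (qpath o par q x)%:C%C) * s r y) y =
  (q x y)%:C%C * KR m s y by move=> y hy; rewrite q_KR.
apply: (csummable_eq e).
have [h _] := @csum_sum _ _ (child o par x) m (fun (r : 'I_m) (y : T) => (ac r (depth o par x).+1 / (qpath o par q x)%:C%C) * s r y)
  (fun r => csummableZ ((hs r (ltn_ord r) x).1)).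
exact: h.
Qed.

Lemma QopKR m s x : (forall r, (r < m)%N -> cdistr o par (s r)) ->
  Qop o par q (KR m s) x =
  \sum_(r < m) (ac r (depth o par x).+1 / (qpath o par q x)%:C%C) * s r x.
Proof.
move=> hs; rewrite /Qop.
have e : forall y, child o par x y ->
  (q x y)%:C%C * KR m s y =
  (fun y => \sum_(r < m) (ac r (depth o par x).+1 / (qpath o par q x)%:C%C) * s r y) y
  by move=> y hy; rewrite q_KR.
rewrite (csum_eq e).
have [_ ->] := @csum_sum _ _ (child o par x) m (fun (r : 'I_m) (y : T) => (ac r (depth o par x).+1 / (qpath o par q x)%:C%C) * s r y)
  (fun r => csummableZ ((hs r (ltn_ord r) x).1)).
apply: eq_bigr => r _; rewrite csumZ; last exact: (hs r (ltn_ord r) x).1.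
by rewrite -(hs r (ltn_ord r) x).2.
Qed.

Lemma LopKR m s x : (forall r, (r < m.+1)%N -> cdistr o par (s r)) ->
  Lop o par q lam (KR m.+1 s) x = KR m (shift s) x.
Proof.
move=> hs; rewrite /Lop QopKR // {1}/KR mulr_sumr -sumrB big_ord_recl /=.
rewrite /Kcoef -!/(ac _ _) ac0 ac0 exprS.
have h2 := qpathC_neq0 x.
have -> : lam * (lam ^+ depth o par x / (qpath o par q x)%:C%C * s 0%N x) -
    lam * lam ^+ depth o par x / (qpath o par q x)%:C%C * s 0%N x = 0 by field.
rewrite add0r /KR; apply: eq_bigr => i _.
rewrite /Kcoef -!/(ac _ _) /bump /= add1n acSS /shift -mulr_natl.
by field.
Qed.

Lemma cdistrZ c (s : T -> R[i]) : cdistr o par s -> cdistr o par (fun y => c * s y).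
Proof.
move=> hs x; have [h1 h2] := hs x; split; first exact: csummableZ.
by rewrite csumZ // -h2.
Qed.

Lemma cdistr0 : cdistr o par (fun _ => 0 : R[i]).
Proof. by move=> x; rewrite csum0; split => //; exact: csummable0. Qed.

Lemma harmonic (h : T -> R[i]) : Qdefined o par q h -> (forall x, Lop o par q lam h x = 0) ->
  cdistr o par (fun x => h x * (qpath o par q x)%:C%C / lam ^+ depth o par x) /\
  forall x, h x = Kcoef o par q lam 0 x * (h x * (qpath o par q x)%:C%C / lam ^+ depth o par x).
Proof.
move=> hQ hL; split; last first.
  move=> x; rewrite /Kcoef -/(ac _ _) ac0.
  have h2 := qpathC_neq0 x; have h3 : lam ^+ depth o par x != 0 by rewrite expf_neq0.
  by field; rewrite h2 h3.
move=> x.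
set c := (qpath o par q x)%:C%C / lam ^+ (depth o par x).+1.
have e : forall y, child o par x y -> c * ((q x y)%:C%C * h y) =
   (fun x => h x * (qpath o par q x)%:C%C / lam ^+ depth o par x) y.
  move=> y hy; rewrite /= (depth_child hy) (qpath_child hy) rmorphM /c /=.
  have h3 : lam ^+ (depth o par x).+1 != 0 by rewrite expf_neq0.
  by field.
split; first exact: (csummable_eq e (csummableZ (hQ x))).
rewrite -(csum_eq e) csumZ; last exact: hQ x.
have := hL x; rewrite /Lop /Qop => /eqP; rewrite subr_eq0 => /eqP <-.
rewrite /c exprS.
have h3 : lam ^+ depth o par x != 0 by rewrite expf_neq0.
by field; rewrite h3 lam0.
Qed.

Lemma KR0 s x : KR 0 s x = 0.
Proof. by rewrite /KR big_ord0. Qed.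

Lemma converse n s : (forall r, (r < n)%N -> cdistr o par (s r)) ->
  polyharmonic o par q lam n (KR n s).
Proof.
elim: n s => [|m IH] s hs.
  by split => // x; rewrite /= KR0.
have hL : Lop o par q lam (KR m.+1 s) = KR m (shift s).
  by apply/funext => x; rewrite LopKR.
have hs' : forall r, (r < m)%N -> cdistr o par (shift s r).
  by move=> r hr; apply: cdistrZ; apply: hs.
have [IH1 IH2] := IH _ hs'.
split.
  case=> [|k] hk; first exact: QdefKR.
  by rewrite iterSr hL; apply: IH1.
by move=> x; rewrite iterSr hL IH2.
Qed.

Lemma Kcoef0_neq0 x : Kcoef o par q lam 0 x != 0.
Proof.
rewrite /Kcoef -/(ac _ _) ac0 mulf_neq0 ?invr_eq0 ?qpathC_neq0 //.
by rewrite expf_neq0.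
Qed.

Lemma natC_neq0 r : (r.+1)%:R != 0 :> R[i].
Proof. by rewrite pnatr_eq0. Qed.

Lemma uniqueness n s t : (forall r, (r < n)%N -> cdistr o par (s r)) ->
  (forall r, (r < n)%N -> cdistr o par (t r)) ->
  (forall x, KR n s x = KR n t x) -> forall r, (r < n)%N -> forall x, s r x = t r x.
Proof.
elim: n s t => [|m IH] s t hs ht he r hr x; first by [].
have eK : KR m.+1 s = KR m.+1 t by apply/funext => y; exact: he.
have e1 : forall y, KR m (shift s) y = KR m (shift t) y.
  by move=> y; rewrite -!LopKR // eK.
have hsh := IH _ _ (fun r hr => cdistrZ _ (hs r.+1 hr)) (fun r hr => cdistrZ _ (ht r.+1 hr)) e1.
have hsucc : forall r, (r < m)%N -> forall y, s r.+1 y = t r.+1 y.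
  move=> r' hr' y; have := hsh r' hr' y; rewrite /shift => /mulfI; apply.
  by rewrite oppr_eq0 natC_neq0.
case: r hr => [|r] hr; last by apply: hsucc.
have := he x; rewrite /KR !big_ord_recl.
rewrite (eq_bigr (fun i : 'I_m => Kcoef o par q lam i.+1 x * t i.+1 x)); last first.
  by move=> i _; rewrite /= /bump /= add1n hsucc.
rewrite [X in _ = _ + X](eq_bigr (fun i : 'I_m => Kcoef o par q lam i.+1 x * t i.+1 x)); last first.
  by move=> i _; rewrite /= /bump /= add1n.
by move/addIr/mulfI; apply; apply: Kcoef0_neq0.
Qed.

Lemma existence n f : polyharmonic o par q lam n f ->
  exists s, (forall r, (r < n)%N -> cdistr o par (s r)) /\ forall x, f x = KR n s x.
Proof.
elim: n f => [|m IH] f [hQ hz].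
  by exists (fun _ _ => 0); split => // x; rewrite KR0; exact: (hz x).
have ph : polyharmonic o par q lam m (Lop o par q lam f).
  split; first by move=> k hk; rewrite -iterSr; apply: hQ.
  by move=> x; rewrite -iterSr; apply: hz.
have [rho [hrho erho]] := IH _ ph.
pose u := fun r y => if r is r'.+1 then (- (r'.+1)%:R^-1) * rho r' y else 0.
have hu : forall r, (r < m.+1)%N -> cdistr o par (u r).
  case=> [|r] hr; first exact: cdistr0.
  exact: (cdistrZ _ (hrho r hr)).
have hLu : forall x, Lop o par q lam (KR m.+1 u) x = Lop o par q lam f x.
  move=> x; rewrite LopKR // erho /KR; apply: eq_bigr => i _.
  rewrite /shift /u; have := natC_neq0 i; move=> hi.
  by congr (_ * _); field.
pose h := fun x => f x - KR m.+1 u x.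
have hQf : Qdefined o par q f := hQ 0%N isT.
have hQK := QdefKR hu.
have eh : forall x y, child o par x y ->
  (fun y => (q x y)%:C%C * f y + (-1) * ((q x y)%:C%C * KR m.+1 u y)) y =
  (q x y)%:C%C * h y.
  by move=> x y _; rewrite /h /=; ring.
have hQh : Qdefined o par q h.
  by move=> x; apply: (csummable_eq (eh x)); apply: csummableD (hQf x) (csummableZ (hQK x)).
have hLh : forall x, Lop o par q lam h x = 0.
  move=> x; have := hLu x; rewrite /Lop /Qop -(csum_eq (eh x)).
  rewrite csumD ?csumZ //; last exact: csummableZ (hQK x).
  rewrite /h => e; apply/eqP; rewrite subr_eq0; apply/eqP.
  move: e; set A := csum _ _; set B := csum _ _ => e.
  have -> : lam * (f x - KR m.+1 u x) = lam * f x - lam * KR m.+1 u x by ring.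
  have E : lam * f x = (lam * KR m.+1 u x - A) + B by rewrite e; ring.
  rewrite E; ring.
have [hs0 hh] := harmonic hQh hLh.
set s0 := fun x => _ in hs0 hh.
exists (fun r => if r is r'.+1 then u r else s0); split.
  by case=> [|r] hr //; apply: hu.
move=> x; have -> : f x = h x + KR m.+1 u x by rewrite /h subrK.
rewrite hh /KR !big_ord_recl /= /u mulr0 add0r.
by [].
Qed.

End Tree.

Unset Implicit Arguments.
Set Strict Implicit.

Theorem proposition6p2 (R : realType) (T : countType) (o : T) (par : T -> T)
    (q : T -> T -> R) (lam : R[i]) (n : nat) :
  rooted_tree o par ->
  stochastic q ->
  (forall x y, 0 < q x y <-> child o par x y) ->
  lam != 0 ->
  (0 < n)%N ->
  (forall f : T -> R[i], polyharmonic o par q lam n f ->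
     exists sigma : 'I_n -> T -> R[i],
       (forall r, cdistr o par (sigma r)) /\
       (forall x, f x = Krepr o par q lam sigma x) /\
       (forall tau : 'I_n -> T -> R[i],
          (forall r, cdistr o par (tau r)) ->
          (forall x, f x = Krepr o par q lam tau x) ->
          forall r x, tau r x = sigma r x)) /\
  (forall sigma : 'I_n -> T -> R[i],
     (forall r, cdistr o par (sigma r)) ->
     polyharmonic o par q lam n (Krepr o par q lam sigma)).
Proof.
move=> rooted _ qpos lam0; case: n => // n _.
have KE : forall sigma : 'I_n.+1 -> T -> R[i], forall x,
    Krepr o par q lam sigma x = KR o par q lam n.+1 (fun k => sigma (inord k)) x.
  by move=> sigma x; rewrite /Krepr /KR /cyl_integral; apply: eq_bigr => r _; rewrite inord_val mulrC.
split.
- move=> f ph; have [s [hs ef]] := existence rooted qpos lam0 ph.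
  have hs' : forall r : 'I_n.+1, cdistr o par (s r) by move=> r; apply: hs.
  have ef' : forall x, f x = Krepr o par q lam (fun r : 'I_n.+1 => s r) x.
    by move=> x; rewrite KE ef /KR; apply: eq_bigr => r _; rewrite inord_val.
  exists (fun r : 'I_n.+1 => s r); split => //; split => // tau htau etau r x.
  have := @uniqueness _ _ _ _ _ _ rooted qpos lam0 n.+1 (fun k => tau (inord k)) s
    (fun k _ => htau _) hs.
  move=> /(_ _ r (ltn_ord r) x); rewrite inord_val; apply.
  by move=> y; rewrite -KE -etau ef.
- move=> sigma hsig.
  have -> : Krepr o par q lam sigma = KR o par q lam n.+1 (fun k => sigma (inord k)).
    by apply/funext => x; rewrite KE.
  by apply: converse => // r _.
Qed.
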